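(* Let $\psi\in \mathcal{F}$. Then for $i=1,2,\dots,I$, $\phi_i\in\mathcal{C}^\uparrow$.
   Context: Fix $I\in\mathbb{N}$. $\mathcal{C}=\{f\in C(\mathbb{R}_+,\mathbb{R}_+):f(0)=0,f\text{ non-decreasing}\}$, $\mathcal{C}^\uparrow=\{f\in\mathcal{C}:f\text{ strictly increasing},\lim_{u\to\infty}f(u)=\infty\}$. For $\psi=(\psi_i)_{i=1}^I\in\mathcal{C}^I$, $\phi_i(u):=u-\sum_{j=1}^I2(i\wedge j)\psi_j(u)$. $\mathcal{F}:=\{\psi\in\mathcal{C}^I:\phi_I\in\mathcal{C}^\uparrow\}$. *)

(* Defs.v *)
(* concrete classical reals R. Functions on R_+ = [0,oo) are
   represented as f : R -> R, with all properties required only on [0,oo). *)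
From Stdlib Require Import Reals.
Open Scope R_scope.

Fixpoint sum1 (n : nat) (f : nat -> R) : R :=
  match n with
  | O => 0
  | S m => sum1 m f + f (S m)
  end.

Definition cont_Rplus (f : R -> R) : Prop :=
  forall x, 0 <= x -> limit1_in f (fun y => 0 <= y) (f x) x.

Definition inC (f : R -> R) : Prop :=
  cont_Rplus f /\
  (forall u, 0 <= u -> 0 <= f u) /\
  f 0 = 0 /\
  (forall u v, 0 <= u -> u <= v -> f u <= f v).

Definition inCup (f : R -> R) : Prop :=
  inC f /\
  (forall u v, 0 <= u -> u < v -> f u < f v) /\
  (forall M, exists U, forall u, U <= u -> 0 <= u -> M <= f u).

(* phi_i(u) = u - sum_{j=1}^I 2 (i /\ j) psi_j(u); psi is indexed by 1..I *)
Definition phi (I : nat) (psi : nat -> R -> R) (i : nat) (u : R) : R :=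
  u - sum1 I (fun j => 2 * INR (Nat.min i j) * psi j u).

Definition inF (I : nat) (psi : nat -> R -> R) : Prop :=
  (forall j, (1 <= j <= I)%nat -> inC (psi j)) /\ inCup (phi I psi I).

(* Main.v *)
Require Import Defs.
From Stdlib Require Import Reals Lra Lia.
Open Scope R_scope.

Lemma sum1_le n (a b : nat -> R) :
  (forall j, (1 <= j <= n)%nat -> a j <= b j) -> sum1 n a <= sum1 n b.
Proof.
  induction n; simpl; intros H; [lra|].
  assert (sum1 n a <= sum1 n b) by (apply IHn; intros; apply H; lia).
  assert (a (S n) <= b (S n)) by (apply H; lia). lra.
Qed.

Lemma sum1_minus n (a b : nat -> R) :
  sum1 n (fun j => a j - b j) = sum1 n a - sum1 n b.
Proof. induction n; simpl; [lra|]. rewrite IHn; lra. Qed.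

Lemma sum1_ext n (a b : nat -> R) :
  (forall j, (1 <= j <= n)%nat -> a j = b j) -> sum1 n a = sum1 n b.
Proof.
  intros H; apply Rle_antisym; apply sum1_le; intros j Hj; rewrite (H j Hj); lra.
Qed.

Lemma sum1_zero n : sum1 n (fun _ => 0) = 0.
Proof. induction n; simpl; lra. Qed.

Lemma sum1_cont n (f : nat -> R -> R) D x :
  (forall j, (1 <= j <= n)%nat -> limit1_in (f j) D (f j x) x) ->
  limit1_in (fun u => sum1 n (fun j => f j u)) D (sum1 n (fun j => f j x)) x.
Proof.
  induction n; simpl; intros H.
  - exact (limit_free (fun _ => 0) D 0 x).
  - apply limit_plus; [apply IHn; intros; apply H; lia | apply H; lia].
Qed.

Theorem lemma3p1 (I : nat) (psi : nat -> R -> R) :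
  inF I psi -> forall i : nat, (1 <= i <= I)%nat -> inCup (phi I psi i).
Proof.
  intros [HC [[HIc [HInn [HI0 HImon]]] [HIstr HIunb]]] i Hi.
  set (c := fun j => 2 * (INR (Nat.min I j) - INR (Nat.min i j))).
  set (g := fun u => sum1 I (fun j => c j * psi j u)).
  assert (Hc : forall j, 0 <= c j).
  { intro j; unfold c. assert (Nat.min i j <= Nat.min I j)%nat by lia.
    apply le_INR in H. lra. }
  assert (Hdec : forall u, phi I psi i u = phi I psi I u + g u).
  { intro u; unfold phi, g.
    assert (E : sum1 I (fun j => c j * psi j u) =
      sum1 I (fun j => 2 * INR (Nat.min I j) * psi j u) -
      sum1 I (fun j => 2 * INR (Nat.min i j) * psi j u)).
    { rewrite <- sum1_minus. apply sum1_ext; intros; unfold c; ring. }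
    rewrite E; ring. }
  assert (Hgmon : forall u v, 0 <= u -> u <= v -> g u <= g v).
  { intros u v Hu Huv; unfold g; apply sum1_le; intros j Hj.
    apply Rmult_le_compat_l; [apply Hc|].
    destruct (HC j Hj) as [_ [_ [_ M]]]; apply M; auto. }
  assert (Hg0 : g 0 = 0).
  { unfold g. transitivity (sum1 I (fun _ => 0)); [|apply sum1_zero]. apply sum1_ext; intros j Hj.
    destruct (HC j Hj) as [_ [_ [Z _]]]. simpl. rewrite Z; ring. }
  assert (Hgnn : forall u, 0 <= u -> 0 <= g u).
  { intros u Hu; rewrite <- Hg0; apply Hgmon; lra. }
  assert (Hstr : forall u v, 0 <= u -> u < v -> phi I psi i u < phi I psi i v).
  { intros u v Hu Huv; rewrite !Hdec.
    pose proof (HIstr u v Hu Huv); pose proof (Hgmon u v Hu (Rlt_le _ _ Huv)); lra. }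
  assert (H0 : phi I psi i 0 = 0) by (rewrite Hdec, HI0, Hg0; ring).
  split; [split; [|split; [|split]]|split].
  - intros x Hx. unfold phi.
    apply limit_minus; [apply lim_x|].
    apply (sum1_cont I (fun j u => 2 * INR (Nat.min i j) * psi j u)).
    intros j Hj. apply limit_mul; [apply limit_free|].
    destruct (HC j Hj) as [Cj _]; apply Cj; auto.
  - intros u Hu. destruct (Req_dec u 0) as [->|Hn]; [lra|].
    rewrite <- H0; left; apply Hstr; lra.
  - exact H0.
  - intros u v Hu Huv. destruct (Req_dec u v) as [->|Hn]; [lra|].
    left; apply Hstr; lra.
  - exact Hstr.
  - intros M. destruct (HIunb M) as [U HU]. exists U. intros u HUu Hu.
    rewrite Hdec. pose proof (HU u HUu Hu); pose proof (Hgnn u Hu); lra.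
Qed.
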